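(* Let $\mathcal{C}_1,\mathcal{C}_2$ be symmetric monoidal anti-involutive categories and let $P_1$ be a monoidal positivity structure on $\mathcal{C}_1$. Let $\zeta\colon G_1\Rightarrow G_2$ be a monoidal anti-involutive natural isomorphism between symmetric monoidal anti-involutive functors $G_1,G_2\colon\mathcal{C}_1\to\mathcal{C}_2$. Then $G_1(P_1)=G_2(P_1)$ after taking closures under transfer.
   Context: Symmetric monoidal anti-involutive category $(\mathcal{C},d,\eta)$: symmetric monoidal category, symmetric monoidal functor $d\colon\mathcal{C}\to\mathcal{C}^{\mathrm{op}}$, monoidal natural isomorphism $\eta\colon\mathrm{id}\Rightarrow d^2$ with $d(\eta_x)\circ\eta_{dx}=\mathrm{id}$. A symmetric monoidal anti-involutive functor $(G,\phi)$: symmetric monoidal functor with monoidal natural isomorphism $\phi\colon G\circ d\Rightarrow d\circ G$ with $\phi_{dx}\circ G(\eta_x)=d(\phi_x)\circ\eta_{G(x)}$. An anti-involutive natural transformation $\zeta\colon(G_1,\phi_1)\Rightarrow(G_2,\phi_2)$ satisfies $(\phi_1)_x=d(\zeta_x)\circ(\phi_2)_x\circ\zeta_{dx}$. A Hermitian pairing is an isomorphism $h\colon c\to dc$ with $d(h)\circ\eta_c=h$. A (monoidal) positivity structure is a collection of Hermitian pairings $(c,h)$ surjecting onto objects of $\mathcal{C}$ (closed under tensor product $(c_1\otimes c_2,\chi\circ(h_1\otimes h_2))$, $\chi$ the monoidal structure of $d$). The transfer of $h$ along an isomorphism $g\colon c'\to c$ is $d(g)\circ h\circ g$; the closure of a collection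 is its closure under transfer. For $(G,\phi)$ and a collection $P$, $G(P)$ is the collection of Hermitian pairings $\phi_c\circ G(h)\colon G(c)\to dG(c)$ for $(c,h)\in P$. *)

(* Defs.v *)
Set Implicit Arguments.
Unset Strict Implicit.
Set Primitive Projections.

Record SMCData := {
  ob : Type;
  hom : ob -> ob -> Type;
  idm : forall x, hom x x;
  cmp : forall x y z, hom y z -> hom x y -> hom x z;   (* cmp g f = g o f *)
  tns : ob -> ob -> ob;
  tnsm : forall x x' y y', hom x x' -> hom y y' -> hom (tns x y) (tns x' y');
  unt : ob;
  asc : forall x y z, hom (tns (tns x y) z) (tns x (tns y z));
  asci : forall x y z, hom (tns x (tns y z)) (tns (tns x y) z);
  lun : forall x, hom (tns unt x) x;
  luni : forall x, hom x (tns unt x);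
  run : forall x, hom (tns x unt) x;
  runi : forall x, hom x (tns x unt);
  brd : forall x y, hom (tns x y) (tns y x)
}.

Arguments hom : clear implicits.
Arguments idm {s} x.
Arguments cmp {s x y z} g f.
Arguments tns {s} x y.
Arguments tnsm {s x x' y y'} f g.
Arguments unt {s}.
Arguments asc {s} x y z.
Arguments asci {s} x y z.
Arguments lun {s} x.
Arguments luni {s} x.
Arguments run {s} x.
Arguments runi {s} x.
Arguments brd {s} x y.

Notation "g ∘ f" := (cmp g f) (at level 40, left associativity).

Definition is_iso {C : SMCData} {x y : ob C} (f : hom C x y) : Prop :=
  exists g : hom C y x, g ∘ f = idm x /\ f ∘ g = idm y.

Record IsSMC (C : SMCData) : Prop := {
  cmp_assoc : forall (w x y z : ob C) (f : hom C w x) (g : hom C x y) (h : hom C y z),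
      h ∘ (g ∘ f) = (h ∘ g) ∘ f;
  cmp_id_l : forall (x y : ob C) (f : hom C x y), idm y ∘ f = f;
  cmp_id_r : forall (x y : ob C) (f : hom C x y), f ∘ idm x = f;
  tns_id : forall x y : ob C, tnsm (idm x) (idm y) = idm (tns x y);
  tns_cmp : forall (x x' x'' y y' y'' : ob C) (f : hom C x x') (g : hom C x' x'')
      (f' : hom C y y') (g' : hom C y' y''),
      tnsm (g ∘ f) (g' ∘ f') = tnsm g g' ∘ tnsm f f';
  asc_nat : forall (x x' y y' z z' : ob C) (f : hom C x x') (g : hom C y y') (h : hom C z z'),
      asc x' y' z' ∘ tnsm (tnsm f g) h = tnsm f (tnsm g h) ∘ asc x y z;
  asc_iso1 : forall x y z : ob C, asci x y z ∘ asc x y z = idm _;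
  asc_iso2 : forall x y z : ob C, asc x y z ∘ asci x y z = idm _;
  lun_nat : forall (x y : ob C) (f : hom C x y), lun y ∘ tnsm (idm unt) f = f ∘ lun x;
  lun_iso1 : forall x : ob C, luni x ∘ lun x = idm _;
  lun_iso2 : forall x : ob C, lun x ∘ luni x = idm _;
  run_nat : forall (x y : ob C) (f : hom C x y), run y ∘ tnsm f (idm unt) = f ∘ run x;
  run_iso1 : forall x : ob C, runi x ∘ run x = idm _;
  run_iso2 : forall x : ob C, run x ∘ runi x = idm _;
  pentagon : forall w x y z : ob C,
      asc w x (tns y z) ∘ asc (tns w x) y z
      = tnsm (idm w) (asc x y z) ∘ asc w (tns x y) z ∘ tnsm (asc w x y) (idm z);
  triangle : forall x y : ob C,
      tnsm (idm x) (lun y) ∘ asc x unt y = tnsm (run x) (idm y);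
  brd_nat : forall (x x' y y' : ob C) (f : hom C x x') (g : hom C y y'),
      brd x' y' ∘ tnsm f g = tnsm g f ∘ brd x y;
  hexagon : forall x y z : ob C,
      asc y z x ∘ brd x (tns y z) ∘ asc x y z
      = tnsm (idm y) (brd x z) ∘ asc y x z ∘ tnsm (brd x y) (idm z);
  brd_sym : forall x y : ob C, brd y x ∘ brd x y = idm _
}.

Definition op (C : SMCData) : SMCData := {|
  ob := ob C;
  hom x y := hom C y x;
  idm x := @idm C x;
  cmp x y z g f := @cmp C z y x f g;
  tns := @tns C;
  tnsm x x' y y' f g := @tnsm C x' x y' y f g;
  unt := @unt C;
  asc x y z := @asci C x y z;
  asci x y z := @asc C x y z;
  lun x := @luni C x;
  luni x := @lun C x;
  run x := @runi C x;
  runi x := @run C x;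
  brd x y := @brd C y x
|}.

Record FuncData (C D : SMCData) := {
  fo : ob C -> ob D;
  fm : forall x y, hom C x y -> hom D (fo x) (fo y);
  fmu : forall x y, hom D (tns (fo x) (fo y)) (fo (tns x y));
  fmui : forall x y, hom D (fo (tns x y)) (tns (fo x) (fo y));
  feps : hom D unt (fo unt);
  fepsi : hom D (fo unt) unt
}.
Arguments fo {C D} f x.
Arguments fm {C D} f {x y} f.
Arguments fmu {C D} f x y.
Arguments fmui {C D} f x y.
Arguments feps {C D} f.
Arguments fepsi {C D} f.

Record IsSMFunctor (C D : SMCData) (F : FuncData C D) : Prop := {
  fm_id : forall x : ob C, fm F (idm x) = idm (fo F x);
  fm_cmp : forall (x y z : ob C) (f : hom C x y) (g : hom C y z),
      fm F (g ∘ f) = fm F g ∘ fm F f;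
  fmu_nat : forall (x x' y y' : ob C) (f : hom C x x') (g : hom C y y'),
      fmu F x' y' ∘ tnsm (fm F f) (fm F g) = fm F (tnsm f g) ∘ fmu F x y;
  fmu_iso1 : forall x y : ob C, fmui F x y ∘ fmu F x y = idm _;
  fmu_iso2 : forall x y : ob C, fmu F x y ∘ fmui F x y = idm _;
  feps_iso1 : fepsi F ∘ feps F = idm _;
  feps_iso2 : feps F ∘ fepsi F = idm _;
  fmu_assoc : forall x y z : ob C,
      fm F (asc x y z) ∘ fmu F (tns x y) z ∘ tnsm (fmu F x y) (idm (fo F z))
      = fmu F x (tns y z) ∘ tnsm (idm (fo F x)) (fmu F y z)
        ∘ asc (fo F x) (fo F y) (fo F z);
  fmu_lun : forall x : ob C,
      fm F (lun x) ∘ fmu F unt x ∘ tnsm (feps F) (idm (fo F x)) = lun (fo F x);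
  fmu_run : forall x : ob C,
      fm F (run x) ∘ fmu F x unt ∘ tnsm (idm (fo F x)) (feps F) = run (fo F x);
  fmu_brd : forall x y : ob C,
      fm F (brd x y) ∘ fmu F x y = fmu F y x ∘ brd (fo F x) (fo F y)
}.

Definition fid (C : SMCData) : FuncData C C := {|
  fo x := x;
  fm x y f := f;
  fmu x y := idm (tns x y);
  fmui x y := idm (tns x y);
  feps := idm unt;
  fepsi := idm unt
|}.

Definition fcomp (C D E : SMCData) (G : FuncData D E) (F : FuncData C D)
  : FuncData C E := {|
  fo x := fo G (fo F x);
  fm x y f := fm G (fm F f);
  fmu x y := fm G (fmu F x y) ∘ fmu G (fo F x) (fo F y);
  fmui x y := fmui G (fo F x) (fo F y) ∘ fm G (fmui F x y);
  feps := fm G (feps F) ∘ feps G;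
  fepsi := fepsi G ∘ fm G (fepsi F)
|}.

Definition fop (C D : SMCData) (F : FuncData C D) : FuncData (op C) (op D) :=
  @Build_FuncData (op C) (op D)
    (fo F)
    (fun (x y : ob (op C)) (f : hom (op C) x y) => @fm C D F y x f)
    (fun x y => fmui F x y)
    (fun x y => fmu F x y)
    (fepsi F)
    (feps F).

Record IsMonNatIso (C D : SMCData) (F G : FuncData C D)
    (theta : forall x : ob C, hom D (fo F x) (fo G x)) : Prop := {
  nt_nat : forall (x y : ob C) (f : hom C x y), theta y ∘ fm F f = fm G f ∘ theta x;
  nt_mon : forall x y : ob C,
      theta (tns x y) ∘ fmu F x y = fmu G x y ∘ tnsm (theta x) (theta y);
  nt_unit : theta unt ∘ feps F = feps G;
  nt_iso : forall x : ob C, is_iso (theta x)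
}.

Arguments IsMonNatIso {C D} F G theta.

Record AICat := {
  ac : SMCData;
  dual : FuncData ac (op ac);
  eta : forall x : ob ac, hom ac x (fo dual (fo dual x))
}.

Arguments dual : clear implicits.
Arguments eta : clear implicits.

(* d^2 = d^op o d : C -> (C^op)^op = C *)
Definition dd (A : AICat) : FuncData (ac A) (ac A) := fcomp (fop (dual A)) (dual A).

Record IsAICat (A : AICat) : Prop := {
  aic_smc : IsSMC (ac A);
  aic_d : IsSMFunctor (dual A);
  aic_eta : IsMonNatIso (fid (ac A)) (dd A) (eta A);
  aic_eta_d : forall x : ob (ac A),
      @cmp (ac A) _ _ _ (fm (dual A) (eta A x)) (eta A (fo (dual A) x)) = idm _
}.

Record AIFunc (A B : AICat) := {
  af : FuncData (ac A) (ac B);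
  aphi : forall x : ob (ac A),
      hom (ac B) (fo af (fo (dual A) x)) (fo (dual B) (fo af x))
}.
Arguments af {A B} a.
Arguments aphi {A B} a x.

(* phi is a monoidal natural iso between the contravariant functors
   G o d and d o G; as functors C1 -> C2^op, its C2-components
   G(d x) -> d(G x) form a natural transformation d o G => G^op o d. *)
Record IsAIFunc (A B : AICat) (G : AIFunc A B) : Prop := {
  aif_sm : IsSMFunctor (af G);
  aif_phi : IsMonNatIso (fcomp (dual B) (af G)) (fcomp (fop (af G)) (dual A)) (aphi G);
  aif_coh : forall x : ob (ac A),
      @cmp (ac B) _ _ _ (aphi G (fo (dual A) x)) (fm (af G) (eta A x))
      = @cmp (ac B) _ _ _ (fm (dual B) (aphi G x)) (eta B (fo (af G) x))
}.

Record IsMonAINatIso (A B : AICat) (G1 G2 : AIFunc A B)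
    (zeta : forall x : ob (ac A), hom (ac B) (fo (af G1) x) (fo (af G2) x)) : Prop := {
  ain_mon : IsMonNatIso (af G1) (af G2) zeta;
  ain_coh : forall x : ob (ac A),
      aphi G1 x
      = @cmp (ac B) _ _ _ (@cmp (ac B) _ _ _ (fm (dual B) (zeta x)) (aphi G2 x))
          (zeta (fo (dual A) x))
}.

Arguments IsMonAINatIso {A B} G1 G2 zeta.

Definition HP (A : AICat) : Type := { c : ob (ac A) & hom (ac A) c (fo (dual A) c) }.

Definition is_herm (A : AICat) (p : HP A) : Prop :=
  is_iso (projT2 p) /\
  @cmp (ac A) _ _ _ (fm (dual A) (projT2 p)) (eta A (projT1 p)) = projT2 p.

(* tensor product of pairings: (c1 (x) c2, chi o (h1 (x) h2)), chi the
   monoidal structure d c1 (x) d c2 -> d (c1 (x) c2) of d *)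
Definition herm_tns (A : AICat) (p q : HP A) : HP A :=
  existT _ (tns (projT1 p) (projT1 q))
    (@cmp (ac A) _ _ _ (fmui (dual A) (projT1 p) (projT1 q))
       (tnsm (projT2 p) (projT2 q))).

Record IsMonPosStruct (A : AICat) (P : HP A -> Prop) : Prop := {
  ps_herm : forall p, P p -> is_herm p;
  ps_surj : forall c : ob (ac A), exists h, P (existT _ c h);
  ps_tns : forall p q, P p -> P q -> P (herm_tns p q)
}.

Definition transfer (A : AICat) (c c' : ob (ac A)) (h : hom (ac A) c (fo (dual A) c))
  (g : hom (ac A) c' c) : HP A :=
  existT _ c' (@cmp (ac A) _ _ _ (@cmp (ac A) _ _ _ (fm (dual A) g) h) g).

Inductive closure (A : AICat) (P : HP A -> Prop) : HP A -> Prop :=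
| cl_base : forall p, P p -> closure P p
| cl_transfer : forall (c c' : ob (ac A)) (h : hom (ac A) c (fo (dual A) c))
    (g : hom (ac A) c' c),
    closure P (existT _ c h) -> is_iso g -> closure P (transfer h g).

Definition img (A B : AICat) (G : AIFunc A B) (P : HP A -> Prop) : HP B -> Prop :=
  fun p' => exists (c : ob (ac A)) (h : hom (ac A) c (fo (dual A) c)),
    P (existT _ c h) /\
    p' = existT (fun c' => hom (ac B) c' (fo (dual B) c')) (fo (af G) c)
           (@cmp (ac B) _ _ _ (aphi G c) (fm (af G) h)).

(* Main.v *)
Require Import Defs.

Lemma closure_mono (A : AICat) (P Q : HP A -> Prop) :
  (forall p, P p -> closure Q p) -> forall p, closure P p -> closure Q p.
Proof.
  intros H p Hp; induction Hp.
  - now apply H.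
  - now apply cl_transfer.
Qed.

Lemma dir (A1 A2 : AICat) (HA2 : IsAICat A2)
  (P1 : HP A1 -> Prop)
  (G1 G2 : AIFunc A1 A2)
  (zeta : forall x : ob (ac A1), hom (ac A2) (fo (af G1) x) (fo (af G2) x))
  (Hzeta : IsMonAINatIso G1 G2 zeta) :
  forall p, img G1 P1 p -> closure (img G2 P1) p.
Proof.
  intros p [c [h [Hc ->]]].
  destruct HA2 as [S D _ _].
  destruct Hzeta as [M coh].
  pose proof (transfer (@cmp (ac A2) _ _ _ (aphi G2 c) (fm (af G2) h)) (zeta c)) as T.
  assert (E : existT (fun c' => hom (ac A2) c' (fo (dual A2) c')) (fo (af G1) c)
           (@cmp (ac A2) _ _ _ (aphi G1 c) (fm (af G1) h))
         = transfer (@cmp (ac A2) _ _ _ (aphi G2 c) (fm (af G2) h)) (zeta c)).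
  { unfold transfer. f_equal.
    rewrite (coh c).
    rewrite <- (cmp_assoc S).
    rewrite (nt_nat M).
    rewrite !(cmp_assoc S). reflexivity. }
  rewrite E. apply cl_transfer.
  - apply cl_base. exists c, h. split; auto.
  - apply (nt_iso M).
Qed.

Lemma dir2 (A1 A2 : AICat) (HA2 : IsAICat A2)
  (P1 : HP A1 -> Prop)
  (G1 G2 : AIFunc A1 A2)
  (zeta : forall x : ob (ac A1), hom (ac A2) (fo (af G1) x) (fo (af G2) x))
  (Hzeta : IsMonAINatIso G1 G2 zeta) :
  forall p, img G2 P1 p -> closure (img G1 P1) p.
Proof.
  intros p [c [h [Hc ->]]].
  destruct HA2 as [S D _ _].
  destruct Hzeta as [M coh].
  destruct (nt_iso M c) as [zi [Hz1 Hz2]].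
  assert (E : existT (fun c' => hom (ac A2) c' (fo (dual A2) c')) (fo (af G2) c)
           (@cmp (ac A2) _ _ _ (aphi G2 c) (fm (af G2) h))
         = transfer (@cmp (ac A2) _ _ _ (aphi G1 c) (fm (af G1) h)) zi).
  { unfold transfer. f_equal.
    rewrite (coh c).
    rewrite <- (cmp_assoc S (fm (af G1) h)).
    rewrite (nt_nat M).
    rewrite !(cmp_assoc S).
    assert (Ed : @cmp (ac A2) _ _ _ (fm (dual A2) zi) (fm (dual A2) (zeta c)) = idm _).
    { pose proof (fm_cmp D zi (zeta c)) as H.
      rewrite Hz2, (fm_id D) in H. simpl in H. exact (eq_sym H). }
    rewrite Ed, (cmp_id_l S), <- (cmp_assoc S zi), Hz2, (cmp_id_r S).
    reflexivity. }
  rewrite E. apply cl_transfer.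
  - apply cl_base. exists c, h. split; auto.
  - exists (zeta c). split; assumption.
Qed.

Theorem mainTheorem14 (A1 A2 : AICat) (HA1 : IsAICat A1) (HA2 : IsAICat A2)
  (P1 : HP A1 -> Prop) (HP1 : IsMonPosStruct P1)
  (G1 G2 : AIFunc A1 A2) (HG1 : IsAIFunc G1) (HG2 : IsAIFunc G2)
  (zeta : forall x : ob (ac A1), hom (ac A2) (fo (af G1) x) (fo (af G2) x))
  (Hzeta : IsMonAINatIso G1 G2 zeta) :
  forall p : HP A2, closure (img G1 P1) p <-> closure (img G2 P1) p.
Proof.
  intro p; split; apply closure_mono.
  - exact (@dir _ _ HA2 P1 _ _ _ Hzeta).
  - exact (@dir2 _ _ HA2 P1 _ _ _ Hzeta).
Qed.
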